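(* Let $M\in\mathbb{R}^{n\times n}$ be real symmetric with spectral decomposition $M=\sum_{i=1}^n\lambda_iu_iu_i^T$, where $\lambda_1>\cdots>\lambda_n$ are simple and $u_1,\dots,u_n$ are orthonormal. Let $p\in(0,1)$, let $Q$ be the random symmetric matrix with independent entries $Q_{ij}$ ($i\le j$) equal to $1/p$ with probability $p$ and $0$ otherwise, let $S=M\circ Q$ and $E=S-M$. Fix $k$ and let $(\lambda_k(S),v_k)$ be the $k$-th eigenpair of $S$ and $(\lambda_k,u_k)$ the $k$-th eigenpair of $M$. Let $$R_k=\sum_{j\ne k}\frac{1}{\lambda_j-\lambda_k}u_ju_j^T,\qquad \Delta_k=R_k\big(E-(\lambda_k(S)-\lambda_k)\mathrm{Id}\big),$$ and let $d_k$ be the distance from $\lambda_k$ to the nearest other eigenvalue of $M$. If $\|E\|_2<d_k/2$, then, with $v_k$ normalized so that $v_k^Tu_k=1$, for every integer $j\ge0$, $$\Big\|v_k-u_k+\Big[\sum_{m=0}^j(-1)^m\Delta_k^m\Big]R_kEu_k\Big\|_2\le\frac12\Big(\frac{2\|E\|_2}{d_k}\Big)^{j+2}\frac{1}{1-\frac{2\|E\|_2}{d_k}}.$$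
   Context: $\|\cdot\|_2$ denotes the spectral norm for matrices and Euclidean norm for vectors; $\circ$ is the Hadamard product. *)

(* Defs.v *)
From HB Require Import structures.
From mathcomp Require Import all_boot all_order all_algebra.
From mathcomp Require Import classical_sets reals.
Set Implicit Arguments. Unset Strict Implicit. Unset Printing Implicit Defensive.
Import Order.TTheory GRing.Theory Num.Theory.
Local Open Scope ring_scope.
Local Open Scope classical_set_scope.

Definition vnorm (R : realType) (n : nat) (x : 'cV[R]_n) : R :=
  Num.sqrt (\sum_(i < n) (x i 0) ^+ 2).

Definition specnorm (R : realType) (m n : nat) (A : 'M[R]_(m, n)) : R :=
  sup [set vnorm (A *m x) | x in [set x : 'cV[R]_n | vnorm x = 1]].

Definition hadamard (R : realType) (m n : nat) (A B : 'M[R]_(m, n)) : 'M[R]_(m, n) :=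
  map2_mx (fun a b => a * b) A B.

Definition eig_gap (R : realType) (n : nat) (lam : 'I_n -> R) (k : 'I_n) : R :=
  inf [set `|lam j - lam k| | j in [set j : 'I_n | j != k]].

(* Main.v *)
Require Import Defs.
From HB Require Import structures.
From mathcomp Require Import all_boot all_order all_algebra.
From mathcomp Require Import classical_sets reals.
From mathcomp Require Import lra ring.
Import Order.TTheory GRing.Theory Num.Theory.
Local Open Scope ring_scope.

Definition dot {R : realType} {n : nat} (x y : 'cV[R]_n) : R :=
  \sum_(i < n) x i 0 * y i 0.

Lemma dotC {R : realType} {n : nat} (x y : 'cV[R]_n) : dot x y = dot y x.
Proof. by apply: eq_bigr => i _; rewrite mulrC. Qed.

Lemma dotDr {R : realType} {n : nat} (x y z : 'cV[R]_n) :
  dot x (y + z) = dot x y + dot x z.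
Proof. by rewrite /dot -big_split; apply: eq_bigr => i _; rewrite mxE mulrDr. Qed.

Lemma dotZr {R : realType} {n : nat} (c : R) (x y : 'cV[R]_n) :
  dot x (c *: y) = c * dot x y.
Proof. by rewrite /dot mulr_sumr; apply: eq_bigr => i _; rewrite mxE mulrCA. Qed.

Lemma dotNr {R : realType} {n : nat} (x y : 'cV[R]_n) :
  dot x (- y) = - dot x y.
Proof. by rewrite -scaleN1r dotZr mulN1r. Qed.

Lemma dotBr {R : realType} {n : nat} (x y z : 'cV[R]_n) :
  dot x (y - z) = dot x y - dot x z.
Proof. by rewrite dotDr dotNr. Qed.

Lemma dot0r {R : realType} {n : nat} (x : 'cV[R]_n) : dot x 0 = 0.
Proof. by rewrite /dot big1 // => i _; rewrite mxE mulr0. Qed.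

Lemma dotsumr {R : realType} {n : nat} (I : finType) (x : 'cV[R]_n) (F : I -> 'cV[R]_n) :
  dot x (\sum_i F i) = \sum_i dot x (F i).
Proof.
rewrite /dot exchange_big /=; apply: eq_bigr => i _.
by rewrite summxE mulr_sumr.
Qed.

Lemma dotDl {R : realType} {n : nat} (x y z : 'cV[R]_n) :
  dot (y + z) x = dot y x + dot z x.
Proof. by rewrite dotC dotDr !(dotC x). Qed.
Lemma dotZl {R : realType} {n : nat} (c : R) (x y : 'cV[R]_n) :
  dot (c *: y) x = c * dot y x.
Proof. by rewrite dotC dotZr dotC. Qed.
Lemma dotNl {R : realType} {n : nat} (x y : 'cV[R]_n) :
  dot (- y) x = - dot y x.
Proof. by rewrite dotC dotNr dotC. Qed.

Lemma dot_ge0 {R : realType} {n : nat} (x : 'cV[R]_n) : 0 <= dot x x.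
Proof. by apply: sumr_ge0 => i _; rewrite -expr2 sqr_ge0. Qed.

Lemma dot_eq0 {R : realType} {n : nat} (x : 'cV[R]_n) : dot x x = 0 -> x = 0.
Proof.
move=> h; apply/matrixP => i j; rewrite ord1 mxE.
have hp : forall t : 'I_n, true -> 0 <= x t 0 * x t 0.
  by move=> t _; rewrite -expr2 sqr_ge0.
have h' := @psumr_eq0P R _ xpredT (fun i => x i 0 * x i 0) hp h i isT.
by apply/eqP; rewrite -[_ == 0]orbb -mulf_eq0 h'.
Qed.

Lemma trmx_dot {R : realType} {n : nat} (x y : 'cV[R]_n) :
  x^T *m y = (dot x y)%:M.
Proof.
apply/matrixP => i j; rewrite !ord1 !mxE /= /dot mulr1n.
by apply: eq_bigr => l _; rewrite mxE.
Qed.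

Lemma vnormE {R : realType} {n : nat} (x : 'cV[R]_n) : vnorm x = Num.sqrt (dot x x).
Proof. by rewrite /vnorm /dot; congr Num.sqrt; apply: eq_bigr => i _; rewrite expr2. Qed.

Lemma vnorm_ge0 {R : realType} {n : nat} (x : 'cV[R]_n) : 0 <= vnorm x.
Proof. by rewrite vnormE sqrtr_ge0. Qed.

Lemma vnorm_sq {R : realType} {n : nat} (x : 'cV[R]_n) : vnorm x ^+ 2 = dot x x.
Proof. by rewrite vnormE sqr_sqrtr // dot_ge0. Qed.

Lemma CS {R : realType} {n : nat} (x y : 'cV[R]_n) :
  dot x y ^+ 2 <= dot x x * dot y y.
Proof.
have [x0|xn0] := eqVneq (dot x x) 0.
  by rewrite (dot_eq0 _ x0) dotC !dot0r expr0n mul0r.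
have hx : 0 < dot x x by rewrite lt0r xn0 dot_ge0.
set a := dot x x; set b := dot x y.
have := dot_ge0 (a *: y - b *: x).
rewrite !(dotDl, dotDr, dotZl, dotZr, dotNl, dotNr) -/a -/b (dotC y x) -/b.
move=> h; have h2 : 0 <= a * (a * dot y y - b ^+ 2).
  by move: h; congr (0 <= _); ring.
by move: h2; rewrite pmulr_rge0 // subr_ge0.
Qed.

Lemma CSabs {R : realType} {n : nat} (x y : 'cV[R]_n) :
  `|dot x y| <= vnorm x * vnorm y.
Proof.
rewrite -ler_sqr ?nnegrE ?mulr_ge0 ?vnorm_ge0 //.
by rewrite exprMn !vnorm_sq real_normK ?num_real // CS.
Qed.

Lemma vnorm_le {R : realType} {n m : nat} (x : 'cV[R]_n) (z : 'cV[R]_m) (c : R) :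
  0 <= c -> dot x x <= c ^+ 2 * dot z z -> vnorm x <= c * vnorm z.
Proof.
move=> c0 h; rewrite !vnormE -[c]ger0_norm // -sqrtr_sqr -sqrtrM ?sqr_ge0 //.
by rewrite ler_sqrt // mulr_ge0 ?sqr_ge0 ?dot_ge0.
Qed.

Lemma vnormD {R : realType} {n : nat} (x y : 'cV[R]_n) :
  vnorm (x + y) <= vnorm x + vnorm y.
Proof.
rewrite -ler_sqr ?nnegrE ?addr_ge0 ?vnorm_ge0 //.
rewrite vnorm_sq sqrrD !vnorm_sq !(dotDl, dotDr) (dotC y x).
have := CSabs x y; have := ler_norm (dot x y); lra.
Qed.

Lemma vnormZ {R : realType} {n : nat} (c : R) (x : 'cV[R]_n) :
  vnorm (c *: x) = `|c| * vnorm x.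
Proof.
rewrite !vnormE dotZl dotZr mulrA -expr2 sqrtrM ?sqr_ge0 //.
by rewrite sqrtr_sqr.
Qed.

Lemma vnormN {R : realType} {n : nat} (x : 'cV[R]_n) : vnorm (- x) = vnorm x.
Proof. by rewrite -scaleN1r vnormZ normrN1 mul1r. Qed.

Lemma vnormB {R : realType} {n : nat} (x y : 'cV[R]_n) :
  vnorm (x - y) <= vnorm x + vnorm y.
Proof. by rewrite -(vnormN y) vnormD. Qed.

Lemma ortho_dot {R : realType} {n : nat} {a : 'I_n -> 'cV[R]_n}
  (ha : forall i j, (a i)^T *m a j = (i == j)%:R%:M) i j :
  dot (a i) (a j) = (i == j)%:R.
Proof. by have := ha i j; rewrite trmx_dot => /matrixP/(_ 0 0); rewrite !mxE /= !mulr1n. Qed.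

Lemma complete {R : realType} {n : nat} {a : 'I_n -> 'cV[R]_n}
  (ha : forall i j, (a i)^T *m a j = (i == j)%:R%:M) :
  \sum_i a i *m (a i)^T = 1%:M.
Proof.
pose A : 'M[R]_n := \matrix_(r, i) a i r 0.
have h1 : A^T *m A = 1%:M.
  apply/matrixP => i j; rewrite !mxE -(ortho_dot ha) /dot.
  by apply: eq_bigr => l _; rewrite !mxE.
have h2 := mulmx1C h1.
rewrite -h2; apply/matrixP => r s; rewrite summxE !mxE.
apply: eq_bigr => i _; rewrite !mxE big_ord1 !mxE.
done.
Qed.

Lemma expand {R : realType} {n : nat} {a : 'I_n -> 'cV[R]_n}
  (ha : forall i j, (a i)^T *m a j = (i == j)%:R%:M) (z : 'cV[R]_n) :
  z = \sum_i dot (a i) z *: a i.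
Proof.
rewrite -{1}(mul1mx z) -(complete ha) mulmx_suml.
by apply: eq_bigr => i _; rewrite -mulmxA trmx_dot mul_mx_scalar.
Qed.

Lemma apply_form {R : realType} {n : nat} (a : 'I_n -> 'cV[R]_n) (al : 'I_n -> R)
  (z : 'cV[R]_n) :
  (\sum_i al i *: (a i *m (a i)^T)) *m z = \sum_i (al i * dot (a i) z) *: a i.
Proof.
rewrite mulmx_suml; apply: eq_bigr => i _.
by rewrite -scalemxAl -mulmxA trmx_dot mul_mx_scalar scalerA.
Qed.

Lemma coord_form {R : realType} {n : nat} {a : 'I_n -> 'cV[R]_n}
  (ha : forall i j, (a i)^T *m a j = (i == j)%:R%:M) (al : 'I_n -> R)
  (z : 'cV[R]_n) j :
  dot (a j) ((\sum_i al i *: (a i *m (a i)^T)) *m z) = al j * dot (a j) z.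
Proof.
rewrite apply_form dotsumr (bigD1 j) //= big1 ?addr0.
  by rewrite dotZr (ortho_dot ha) eqxx mulr1.
by move=> i ij; rewrite dotZr (ortho_dot ha) eq_sym (negbTE ij) mulr0.
Qed.

Lemma coord_eq {R : realType} {n : nat} {a : 'I_n -> 'cV[R]_n}
  (ha : forall i j, (a i)^T *m a j = (i == j)%:R%:M) (z1 z2 : 'cV[R]_n) :
  (forall i, dot (a i) z1 = dot (a i) z2) -> z1 = z2.
Proof.
by move=> h; rewrite (expand ha z1) (expand ha z2); apply: eq_bigr => i _; rewrite h.
Qed.

Lemma parseval {R : realType} {n : nat} {a : 'I_n -> 'cV[R]_n}
  (ha : forall i j, (a i)^T *m a j = (i == j)%:R%:M) (z : 'cV[R]_n) :
  dot z z = \sum_i dot (a i) z ^+ 2.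
Proof.
rewrite {2}(expand ha z) dotsumr; apply: eq_bigr => i _.
by rewrite dotZr dotC expr2.
Qed.

Lemma exists_y {R : realType} {n : nat} (a b : 'I_n -> 'cV[R]_n) (k : 'I_n) :
  exists y : 'cV[R]_n, [/\ y != 0, forall i : 'I_n, (k < i)%N -> dot (a i) y = 0
    & forall i : 'I_n, (i < k)%N -> dot (b i) y = 0].
Proof.
pose B : 'M[R]_n := \matrix_(i, j) (if (k < j)%N then a j i 0
                                    else if (j < k)%N then b j i 0 else 0).
have : \det B == 0.
  by rewrite (expand_det_col B k) big1 // => i _; rewrite mxE ltnn mul0r.
case/det0P => r rn0 rB.
exists r^T; split.
- by apply: contra rn0 => /eqP h; rewrite -[r]trmxK h trmx0.
- move=> i ki; move/matrixP: (rB) => /(_ 0 i); rewrite !mxE /dot => h; apply: (eq_trans _ h).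
  by apply: eq_bigr => l _; rewrite !mxE ki mulrC.
- move=> i ik; move/matrixP: (rB) => /(_ 0 i); rewrite !mxE /dot => h; apply: (eq_trans _ h).
  have ki : (k < i)%N = false by apply/negbTE; rewrite -leqNgt ltnW.
  by apply: eq_bigr => l _; rewrite !mxE ki ik mulrC.
Qed.

Lemma vnorm0 {R : realType} {n : nat} : vnorm (0 : 'cV[R]_n) = 0.
Proof. by rewrite vnormE dot0r sqrtr0. Qed.

Lemma vnorm_gt0 {R : realType} {n : nat} {y : 'cV[R]_n} : y != 0 -> 0 < vnorm y.
Proof.
move=> yn0; rewrite lt0r vnorm_ge0 andbT; apply: contra yn0 => /eqP h.
by apply/eqP/dot_eq0; rewrite -vnorm_sq h expr0n.
Qed.

Lemma specnorm_has_sup {R : realType} {m n : nat} (A : 'M[R]_(m, n)) (e : 'cV[R]_n) :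
  vnorm e = 1 ->
  has_sup [set vnorm (A *m x) | x in [set x : 'cV[R]_n | vnorm x = 1]].
Proof.
move=> he; split; first by exists (vnorm (A *m e)); exists e.
exists (Num.sqrt (\sum_i dot (row i A)^T (row i A)^T)) => z [x /= hx <-].
rewrite vnormE ler_sqrt; last by apply: sumr_ge0 => i _; apply: dot_ge0.
rewrite /dot; apply: ler_sum => i _.
have -> : (A *m x) i 0 = dot (row i A)^T x.
  by rewrite mxE /dot; apply: eq_bigr => l _; rewrite !mxE.
rewrite -expr2; have := CS (row i A)^T x.
by rewrite -(vnorm_sq x) hx expr1n mulr1.
Qed.

Lemma specnorm_ub {R : realType} {m n : nat} (A : 'M[R]_(m, n)) (e : 'cV[R]_n)
  (he : vnorm e = 1) (y : 'cV[R]_n) : vnorm (A *m y) <= specnorm A * vnorm y.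
Proof.
have hs := sup_upper_bound (specnorm_has_sup A e he).
have [->|yn0] := eqVneq y 0; first by rewrite mulmx0 !vnorm0 mulr0.
have N0 := vnorm_gt0 yn0.
rewrite -ler_pdivrMr //.
apply: hs; exists ((vnorm y)^-1 *: y) => /=.
  by rewrite vnormZ ger0_norm ?invr_ge0 ?vnorm_ge0 // mulVf // gt_eqF.
by rewrite -scalemxAr vnormZ ger0_norm ?invr_ge0 ?vnorm_ge0 // mulrC.
Qed.

Lemma specnorm_ge0 {R : realType} {m n : nat} (A : 'M[R]_(m, n)) (e : 'cV[R]_n)
  (he : vnorm e = 1) : 0 <= specnorm A.
Proof.
have hs := sup_upper_bound (specnorm_has_sup A e he).
apply: le_trans (vnorm_ge0 (A *m e)) _; apply: hs; by exists e.
Qed.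
Theorem theorem2 (R : realType) (n : nat)
    (M : 'M[R]_n) (lam : 'I_n -> R) (u : 'I_n -> 'cV[R]_n)
    (lam_decr : forall i j : 'I_n, (i < j)%N -> lam j < lam i)
    (u_orthonormal : forall i j : 'I_n, (u i)^T *m u j = (i == j)%:R%:M)
    (M_spec : M = \sum_(i < n) lam i *: (u i *m (u i)^T))
    (p : R) (p_gt0 : 0 < p) (p_lt1 : p < 1)
    (Q : 'M[R]_n) (Q_sym : Q^T = Q)
    (Q_vals : forall i j, Q i j = 0 \/ Q i j = p^-1)
    (k : 'I_n)
    (* k-th eigenvalue of S = M o Q, via a spectral decomposition of S with
       eigenvalues listed in nonincreasing order *)
    (mu : 'I_n -> R) (w : 'I_n -> 'cV[R]_n)
    (mu_noninc : forall i j : 'I_n, (i <= j)%N -> mu j <= mu i)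
    (w_orthonormal : forall i j : 'I_n, (w i)^T *m w j = (i == j)%:R%:M)
    (S_spec : hadamard M Q = \sum_(i < n) mu i *: (w i *m (w i)^T))
    (v : 'cV[R]_n)
    (v_eig : hadamard M Q *m v = mu k *: v)
    (v_norml : (v^T *m u k) = 1%:M)
    (j : nat) :
  let S := hadamard M Q in
  let E := S - M in
  let Rk := \sum_(i < n | i != k) (lam i - lam k)^-1 *: (u i *m (u i)^T) in
  let Delta := Rk *m (E - (mu k - lam k)%:M) in
  let d := eig_gap lam k in
  specnorm E < d / 2 ->
  vnorm (v - u k + (\sum_(m < j.+1) ((-1) ^+ m *: Delta ^+ m)) *m Rk *m E *m u k)
    <= 2^-1 * (2 * specnorm E / d) ^+ (j + 2) * (1 - 2 * specnorm E / d)^-1.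
Proof.
move=> S E Rk Delta d hE.
have he : vnorm (u k) = 1.
  by rewrite vnormE (ortho_dot u_orthonormal) eqxx sqrtr1.
pose e := specnorm E.
have e0 : 0 <= e := specnorm_ge0 E (u k) he.
have d0 : 0 < d by rewrite -/e in hE; lra.
have gap : forall i, i != k -> d <= `|lam i - lam k|.
  move=> i ik; rewrite /d /eig_gap.
  apply: ge_inf; last by exists i.
  by exists 0 => z [l _ <-]; exact: normr_ge0.
have cM : forall z j, dot (u j) (M *m z) = lam j * dot (u j) z.
  by move=> z l; rewrite [in M *m z]M_spec (coord_form u_orthonormal).
have cS : forall z j, dot (w j) (S *m z) = mu j * dot (w j) z.
  by move=> z l; rewrite /S S_spec (coord_form w_orthonormal).
pose co j := if j != k then (lam j - lam k)^-1 else 0.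
have RkE : Rk = \sum_i co i *: (u i *m (u i)^T).
  rewrite /Rk big_mkcond; apply: eq_bigr => i _; rewrite /co.
  by case: ifP => _ //; rewrite scale0r.
have cR : forall z j, dot (u j) (Rk *m z) = co j * dot (u j) z.
  by move=> z l; rewrite RkE (coord_form u_orthonormal).
have Eb : forall y, `|dot y (E *m y)| <= e * dot y y.
  move=> y; apply: le_trans (CSabs _ _) _.
  rewrite -vnorm_sq expr2 mulrA [e * _]mulrC -mulrA ler_wpM2l ?vnorm_ge0 //.
  exact: specnorm_ub he _.
have Ediff : forall y, dot y (E *m y) = dot y (S *m y) - dot y (M *m y).
  by move=> y; rewrite /E mulmxBl dotBr.
have qM : forall y, dot y (M *m y) = \sum_i lam i * dot (u i) y ^+ 2.
  move=> y; rewrite [in M *m y]M_spec apply_form dotsumr; apply: eq_bigr => i _.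
  by rewrite dotZr dotC expr2 mulrA.
have qS : forall y, dot y (S *m y) = \sum_i mu i * dot (w i) y ^+ 2.
  move=> y; rewrite /S S_spec apply_form dotsumr; apply: eq_bigr => i _.
  by rewrite dotZr dotC expr2 mulrA.
have lamk_le : forall i : 'I_n, (i <= k)%N -> lam k <= lam i.
  move=> i; rewrite leq_eqVlt => /orP [/eqP h|h]; last exact: ltW (lam_decr _ _ h).
  by rewrite (val_inj h).
have lamk_ge : forall i : 'I_n, (k <= i)%N -> lam i <= lam k.
  move=> i; rewrite leq_eqVlt => /orP [/eqP h|h]; last exact: ltW (lam_decr _ _ h).
  by rewrite (val_inj h).
have weyl1 : lam k - e <= mu k.
  have [y [yn0 hu hw]] := exists_y u w k.
  have N0 : 0 < dot y y by rewrite -vnorm_sq exprn_gt0 // vnorm_gt0.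
  have h1 : lam k * dot y y <= dot y (M *m y).
    rewrite qM (parseval u_orthonormal) mulr_sumr; apply: ler_sum => i _.
    case: (ltnP k i) => ki; first by rewrite hu // expr0n /= !mulr0.
    by rewrite ler_wpM2r ?sqr_ge0 // lamk_le.
  have h2 : dot y (S *m y) <= mu k * dot y y.
    rewrite qS (parseval w_orthonormal) mulr_sumr; apply: ler_sum => i _.
    case: (ltnP i k) => ki; first by rewrite hw // expr0n /= !mulr0.
    by rewrite ler_wpM2r ?sqr_ge0 // mu_noninc.
  have h3 := Eb y; rewrite Ediff in h3.
  have h4 : dot y (M *m y) - dot y (S *m y) <= e * dot y y.
    by rewrite (le_trans (ler_norm _)) // distrC.
  have h5 : (lam k - e - mu k) * dot y y <= 0.
    rewrite !mulrBl; lra.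
  move: h5; rewrite pmulr_lle0 //; lra.
have weyl2 : mu k <= lam k + e.
  have [y [yn0 hw hu]] := exists_y w u k.
  have N0 : 0 < dot y y by rewrite -vnorm_sq exprn_gt0 // vnorm_gt0.
  have h1 : dot y (M *m y) <= lam k * dot y y.
    rewrite qM (parseval u_orthonormal) mulr_sumr; apply: ler_sum => i _.
    case: (ltnP i k) => ki; first by rewrite hu // expr0n /= !mulr0.
    by rewrite ler_wpM2r ?sqr_ge0 // lamk_ge.
  have h2 : mu k * dot y y <= dot y (S *m y).
    rewrite qS (parseval w_orthonormal) mulr_sumr; apply: ler_sum => i _.
    case: (ltnP k i) => ki; first by rewrite hw // expr0n /= !mulr0.
    by rewrite ler_wpM2r ?sqr_ge0 // mu_noninc.
  have h3 := Eb y; rewrite Ediff in h3.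
  have h4 : dot y (S *m y) - dot y (M *m y) <= e * dot y y.
    by rewrite (le_trans (ler_norm _)).
  have h5 : (mu k - lam k - e) * dot y y <= 0.
    rewrite !mulrBl; lra.
  move: h5; rewrite pmulr_lle0 //; lra.
have hdel : `|mu k - lam k| <= e by rewrite ler_norml; apply/andP; split; lra.
have hR : forall z, vnorm (Rk *m z) <= d^-1 * vnorm z.
  move=> z; apply: vnorm_le; first by rewrite invr_ge0 ltW.
  rewrite (parseval u_orthonormal) (parseval u_orthonormal z) mulr_sumr.
  apply: ler_sum => i _; rewrite cR exprMn ler_wpM2r ?sqr_ge0 //.
  rewrite /co; case: ifP => ik; last by rewrite expr0n /= sqr_ge0.
  have g := gap i ik.
  rewrite -real_normK ?num_real // ler_sqr ?nnegrE ?normr_ge0 //; last first.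
    by rewrite invr_ge0 ltW.
  by rewrite normfV lef_pV2 // posrE // (lt_le_trans d0 g).
pose q := 2 * e / d.
have hD : forall z, vnorm (Delta *m z) <= q * vnorm z.
  move=> z; rewrite /Delta -mulmxA mulmxBl mul_scalar_mx.
  apply: le_trans (hR _) _.
  have h1 := vnormB (E *m z) ((mu k - lam k) *: z).
  have h2 := specnorm_ub E (u k) he z.
  rewrite vnormZ in h1.
  have h3 : `|mu k - lam k| * vnorm z <= e * vnorm z by rewrite ler_wpM2r ?vnorm_ge0.
  have -> : q * vnorm z = d^-1 * (2 * e * vnorm z) by rewrite /q; ring.
  rewrite ler_wpM2l ?invr_ge0 ?(ltW d0) //.
  rewrite -/e in h2; lra.
pose x := v - u k.
have vu1 : dot (u k) v = 1.
  move: v_norml; rewrite trmx_dot => /matrixP/(_ 0 0); rewrite !mxE /= mulr1n.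
  by rewrite dotC.
have cEv : forall z j, dot (u j) ((E - (mu k - lam k)%:M) *m z)
    = dot (u j) (S *m z) - lam j * dot (u j) z - (mu k - lam k) * dot (u j) z.
  by move=> z l; rewrite mulmxBl mul_scalar_mx dotBr dotZr /E mulmxBl dotBr cM.
have key : x = - (Delta *m v).
  apply: (coord_eq u_orthonormal) => l.
  rewrite dotNr /Delta -mulmxA cR cEv /S v_eig dotZr /x dotBr (ortho_dot u_orthonormal).
  rewrite /co; case: eqP => [->|/eqP lk]; first by rewrite vu1 /= mul0r oppr0 subrr.
  rewrite /= subr0.
  have nz : lam l - lam k != 0.
    by rewrite -normr_gt0 (lt_le_trans d0) // gap.
  by field.
have Rku : Rk *m u k = 0.
  apply: (coord_eq u_orthonormal) => l.
  rewrite cR dot0r (ortho_dot u_orthonormal) /co.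
  by case: eqP => [->|/eqP lk] /=; rewrite ?mul0r ?mulr0.
pose b := Rk *m E *m u k.
have hDu : Delta *m u k = b.
  by rewrite /Delta -mulmxA mulmxBl mul_scalar_mx mulmxBr -scalemxAr Rku scaler0 subr0 mulmxA.
have hx2 : x = - b - Delta *m x.
  by rewrite {1}key -hDu -opprD -mulmxDr /x addrC subrK.
have ind : forall jj : nat,
    x + (\sum_(m < jj.+1) ((-1) ^+ m *: Delta ^+ m)) *m b
    = (-1) ^+ jj.+1 *: (Delta ^+ jj.+1 *m x).
  elim=> [|jj IH].
    rewrite big_ord1 expr0 scale1r mul1mx expr1 expr1 scaleN1r.
    by rewrite {1}hx2 addrAC addNr add0r.
  rewrite big_ord_recr /= mulmxDl addrA IH -scalemxAl -scalerDr -mulmxDr.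
  by rewrite {1}hx2 addrAC addNr add0r mulmxN scalerN mulmxA mulmxE -exprSr [(-1) ^+ jj.+2]exprS mulN1r scaleNr.
have q0 : 0 <= q.
  by rewrite /q; apply: divr_ge0; [apply: mulr_ge0 | apply: ltW].
have pw : forall (m : nat) z, vnorm (Delta ^+ m *m z) <= q ^+ m * vnorm z.
  elim=> [|m IH] z; first by rewrite expr0 mul1mx expr0 mul1r.
  rewrite exprS (_ : Delta * Delta ^+ m = Delta *m Delta ^+ m); last by rewrite mulmxE.
  rewrite -mulmxA exprS -mulrA.
  apply: le_trans (hD _) _; rewrite ler_wpM2l //.
rewrite -/e -/q.
have -> : (\sum_(m < j.+1) (-1) ^+ m *: Delta ^+ m) *m Rk *m E *m u k
    = (\sum_(m < j.+1) (-1) ^+ m *: Delta ^+ m) *m b by rewrite /b !mulmxA.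
rewrite -/x ind vnormZ normrX normrN1 expr1n mul1r.
have hb : vnorm b <= d^-1 * e.
  rewrite /b -mulmxA; apply: le_trans (hR _) _; rewrite ler_wpM2l ?invr_ge0 ?(ltW d0) //.
  by have := specnorm_ub E (u k) he (u k); rewrite he mulr1.
have hX : vnorm x <= vnorm b + q * vnorm x.
  rewrite {1}hx2; apply: le_trans (vnormB _ _) _; rewrite vnormN lerD2l; exact: hD.
have q1 : q < 1.
  rewrite /q ltr_pdivrMr // mul1r; rewrite -/e in hE; lra.
have hX2 : vnorm x <= d^-1 * e / (1 - q).
  rewrite ler_pdivlMr ?subr_gt0 //; nra.
apply: le_trans (pw _ _) _.
apply: le_trans (ler_wpM2l (exprn_ge0 _ q0) hX2) _.
have q1' : 1 - q != 0 by rewrite subr_eq0 eq_sym lt_eqF.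
have dn0 : d != 0 by rewrite gt_eqF.
rewrite addn2 le_eqVlt; apply/orP; left; apply/eqP; rewrite !exprS.
have hd2 : d - 2 * e != 0.
  by rewrite gt_eqF // subr_gt0; rewrite -/e in hE; lra.
move: q1'; rewrite /q => q1'; field.
by rewrite -/d dn0 hd2.
Qed.
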